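(* Let $Y_1=1$ and, for $n\ge2$, $Y_n=\lfloor (n+I)/2\rfloor$ with $I\sim$ Bernoulli$(1/2)$. Consider the leader election process started with $n$ players and stopped as soon as at most $3$ players remain, and let $\pi_i(n)$ be the probability that it ends with exactly $i$ players. Then for every $n\ge2$, $\pi_2(n)=\psi_2(n)$ where $\psi_2(2^x)=|2^{1+x-\lfloor x\rfloor}-3|$ for real $x\ge1$; moreover $\pi_3(n)=1-\pi_2(n)$ and $\pi_1(n)=0$ for $n\ge2$.
   Context: The process: $N_0=n$ and $N_{k+1}$ has the law of $Y_{N_k}$ given the past; it stops at the first $k$ with $N_k\le 3$, ending with $N_k$ players. *)

(* Defs.v *)
From Stdlib Require Import Reals Arith.
Open Scope R_scope.

(* Law of Y_j : Y_1 = 1, and for j >= 2, Y_j = floor((j+I)/2), I ~ Bernoulli(1/2). 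
   lawY j m = P(Y_j = m). *)
Definition lawY (j m : nat) : R :=
  if (j <=? 1)%nat then (if Nat.eqb m 1 then 1 else 0)
  else (if Nat.eqb m (j / 2)%nat then / 2 else 0)
     + (if Nat.eqb m ((j + 1) / 2)%nat then / 2 else 0).

Definition stopK (j m : nat) : R :=
  if (j <=? 3)%nat then (if Nat.eqb j m then 1 else 0) else lawY j m.

(* dist k n m = P(N_{min(k,T)} = m) for the process started at N_0 = n,
   T = first time with N_T <= 3.  States never exceed n, so summing over
   j in {0..n} covers the whole support. *)
Fixpoint dist (k n m : nat) : R :=
  match k with
  | O => if Nat.eqb n m then 1 else 0
  | S k' => sum_f_R0 (fun j => dist k' n j * stopK j m) n
  end.

(* pi_i(n) = P(process ends with exactly i players) = lim_k P(N_{min(k,T)} = i)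
   (for i <= 3).  is_pi i n p  means  pi_i(n) = p. *)
Definition is_pi (i n : nat) (p : R) : Prop :=
  Un_cv (fun k => dist k n i) p.

(* psi_2(2^x) = | 2^(1 + x - floor x) - 3 |, i.e. psi_2(y) with x = log_2 y. *)
Definition psi2 (y : R) : R :=
  let x := ln y / ln 2 in
  Rabs (Rpower 2 (1 + x - IZR (Int_part x)) - 3).

(* Main.v *)
Require Import Defs.
From Stdlib Require Import Reals Lra Lia.
Open Scope R_scope.

Lemma INR_pow2 k : INR (2^k) = 2^k.
Proof. rewrite pow_INR. reflexivity. Qed.

Lemma psi2_closed k j : (2^k <= j < 2^(S k))%nat -> psi2 (INR j) = Rabs (2 * INR j / 2^k - 3).
Proof.
  intros [H1 H2].
  apply le_INR in H1. apply lt_INR in H2. rewrite INR_pow2 in H1. rewrite INR_pow2 in H2.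
  simpl in H2.
  assert (HD : 0 < 2^k) by (apply pow_lt; lra).
  assert (Hl2 : 0 < ln 2) by (pose proof ln_lt_2; lra).
  set (r := INR j / 2^k).
  assert (Hr1 : 1 <= r) by (unfold r; apply Rmult_le_reg_r with (2^k); [lra|]; field_simplify; lra).
  assert (Hr2 : r < 2) by (unfold r; apply Rmult_lt_reg_r with (2^k); [lra|]; field_simplify; lra).
  assert (Hj : INR j = 2^k * r) by (unfold r; field; lra).
  assert (Hln : ln (INR j) = INR k * ln 2 + ln r).
  { rewrite Hj, ln_mult, ln_pow; lra. }
  set (t := ln r / ln 2).
  assert (Ht0 : 0 <= t).
  { unfold t. apply Rmult_le_pos; [|left; apply Rinv_0_lt_compat; lra].
    destruct (Req_dec r 1) as [->|Hne]; [rewrite ln_1; lra|].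
    left. rewrite <- ln_1. apply ln_increasing; lra. }
  assert (Ht1 : t < 1).
  { unfold t. apply Rmult_lt_reg_r with (ln 2); [lra|]. field_simplify; [|lra].
    apply ln_increasing; lra. }
  unfold psi2.
  assert (Hx : ln (INR j) / ln 2 = INR k + t) by (rewrite Hln; unfold t; field; lra).
  rewrite Hx.
  assert (Hint : IZR (Int_part (INR k + t)) = INR k).
  { unfold Int_part. rewrite <- (tech_up (INR k + t) (Z.of_nat k + 1)).
    - rewrite minus_IZR, plus_IZR, <- INR_IZR_INZ. lra.
    - rewrite plus_IZR, <- INR_IZR_INZ. lra.
    - rewrite plus_IZR, <- INR_IZR_INZ. lra. }
  rewrite Hint.
  replace (Rpower 2 (1 + (INR k + t) - INR k)) with (2 * r).
  - f_equal. unfold r. field. lra.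
  - unfold Rpower. replace ((1 + (INR k + t) - INR k) * ln 2) with (ln 2 + ln r)
      by (unfold t; field; lra).
    rewrite exp_plus, !exp_ln; lra.
Qed.

Lemma half_spec i : exists q, (i = 2*q /\ i/2 = q /\ (i+1)/2 = q)%nat \/ (i = 2*q+1 /\ i/2 = q /\ (i+1)/2 = q+1)%nat.
Proof.
  destruct (Nat.Even_or_Odd i) as [[q Hq]|[q Hq]]; exists q; [left|right]; subst i; repeat split.
  - symmetry; apply (Nat.div_unique _ 2 _ 0); lia.
  - symmetry; apply (Nat.div_unique _ 2 _ 1); lia.
  - symmetry; apply (Nat.div_unique _ 2 _ 1); lia.
  - symmetry; apply (Nat.div_unique _ 2 _ 0); lia.
Qed.

Lemma delta_sum (g : nat -> R) a N :
  sum_f_R0 (fun j => if Nat.eqb j a then g j else 0) N = if (a <=? N)%nat then g a else 0.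
Proof.
  induction N.
  - simpl. destruct a; simpl; reflexivity.
  - rewrite tech5. cbv beta. rewrite IHN. destruct (Nat.eqb_spec (S N) a).
    + subst. rewrite (proj2 (Nat.leb_nle (S N) N)) by lia. rewrite Nat.leb_refl. ring.
    + destruct (Nat.leb_spec a N); destruct (Nat.leb_spec a (S N)); try lia; ring.
Qed.

Definition harm (h : nat -> R) := forall i, (4 <= i)%nat -> h i = (h (i/2)%nat + h ((i+1)/2)%nat) / 2.

Lemma Kh h : harm h -> forall i n, (i <= n)%nat -> sum_f_R0 (fun j => stopK i j * h j) n = h i.
Proof.
  intros Hh i n Hin.
  destruct (Nat.leb_spec i 3) as [Hi|Hi].
  - rewrite (sum_eq _ (fun j => if Nat.eqb j i then h j else 0)).
    + rewrite delta_sum. rewrite (proj2 (Nat.leb_le i n)) by lia. reflexivity.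
    + intros j _. unfold stopK. rewrite (proj2 (Nat.leb_le i 3)) by lia.
      rewrite Nat.eqb_sym. destruct (Nat.eqb j i); ring.
  - rewrite (sum_eq _ (fun j => (if Nat.eqb j (i/2)%nat then h j / 2 else 0) +
                               (if Nat.eqb j ((i+1)/2)%nat then h j / 2 else 0))).
    + rewrite sum_plus, !delta_sum.
      destruct (half_spec i) as [q [[E1 [E2 E3]]|[E1 [E2 E3]]]]; rewrite E2, E3;
      repeat rewrite (proj2 (Nat.leb_le _ n)) by lia;
      rewrite (Hh i) by lia; rewrite E2, E3; field.
    + intros j _. unfold stopK, lawY. rewrite (proj2 (Nat.leb_nle i 3)) by lia.
      rewrite (proj2 (Nat.leb_nle i 1)) by lia.
      destruct (Nat.eqb j (i/2)%nat); destruct (Nat.eqb j ((i+1)/2)%nat); field.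
Qed.

Lemma sum_swap (a : nat -> nat -> R) n m :
  sum_f_R0 (fun j => sum_f_R0 (fun i => a i j) n) m = sum_f_R0 (fun i => sum_f_R0 (fun j => a i j) m) n.
Proof.
  induction m; simpl.
  - reflexivity.
  - rewrite IHm, <- sum_plus. reflexivity.
Qed.

Lemma invariance h n : harm h -> forall k, sum_f_R0 (fun j => Defs.dist k n j * h j) n = h n.
Proof.
  intros Hh k. induction k.
  - simpl. rewrite (sum_eq _ (fun j => if Nat.eqb j n then h j else 0)).
    + rewrite delta_sum, Nat.leb_refl. reflexivity.
    + intros j _. rewrite Nat.eqb_sym. destruct (Nat.eqb j n); ring.
  - simpl.
    rewrite (sum_eq _ (fun j => sum_f_R0 (fun i => Defs.dist k n i * stopK i j * h j) n)).
    2:{ intros j _. rewrite <- scal_sum. ring. }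
    rewrite sum_swap. rewrite <- IHk. apply sum_eq. intros i Hi.
    rewrite <- (Kh h Hh i n Hi). rewrite scal_sum.
    apply sum_eq. intros j _. ring.
Qed.

Lemma support n : forall k j, (4 <= j)%nat -> (n < j + k)%nat -> Defs.dist k n j = 0.
Proof.
  induction k; intros j Hj Hjk.
  - simpl. destruct (Nat.eqb_spec n j); [lia|reflexivity].
  - simpl. apply sum_eq_R0. intros i Hi.
    destruct (Nat.leb_spec i 3).
    + unfold stopK. rewrite (proj2 (Nat.leb_le i 3)) by lia.
      destruct (Nat.eqb_spec i j); [lia|ring].
    + destruct (Nat.ltb_spec n (i + k)).
      * rewrite IHk by lia. ring.
      * unfold stopK, lawY. rewrite (proj2 (Nat.leb_nle i 3)) by lia.
        rewrite (proj2 (Nat.leb_nle i 1)) by lia.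
        destruct (half_spec i) as [q [[E1 [E2 E3]]|[E1 [E2 E3]]]]; rewrite E2, E3;
        destruct (Nat.eqb_spec j q); try lia; try (destruct (Nat.eqb_spec j (q+1)); try lia); ring.
Qed.

Lemma tail (g : nat -> R) N : (3 <= N)%nat -> (forall j, (4 <= j)%nat -> g j = 0) ->
  sum_f_R0 g N = g 0%nat + g 1%nat + g 2%nat + g 3%nat.
Proof.
  intros HN Hg. induction N; [lia|].
  destruct (Nat.eq_dec N 2).
  - subst. simpl. ring.
  - simpl. rewrite IHN by lia. rewrite (Hg (S N)) by lia. ring.
Qed.

Lemma small n : (n <= 3)%nat -> forall k m, Defs.dist k n m = if Nat.eqb n m then 1 else 0.
Proof.
  intros Hn k. induction k; intros m; [reflexivity|].
  simpl. rewrite (sum_eq _ (fun j => if Nat.eqb j n then stopK j m else 0)).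
  - rewrite delta_sum, Nat.leb_refl. unfold stopK. rewrite (proj2 (Nat.leb_le n 3)) by lia.
    reflexivity.
  - intros j _. rewrite IHk, Nat.eqb_sym. destruct (Nat.eqb j n); ring.
Qed.

Lemma ev_cv (u : nat -> R) l N : (forall k, (N <= k)%nat -> u k = l) -> Un_cv u l.
Proof.
  intros H eps He. exists N. intros k Hk. rewrite H by lia. rewrite R_dist_eq. lra.
Qed.

Lemma psi2_closed' k j : (2^k <= j <= 2^(S k))%nat -> psi2 (INR j) = Rabs (2 * INR j / 2^k - 3).
Proof.
  intros [H1 H2]. destruct (Nat.eq_dec j (2^(S k))).
  - subst j. assert (Hp: (0 < 2^k)%nat) by (apply Nat.neq_0_lt_0, Nat.pow_nonzero; lia).
    assert (Hk : 0 < 2^k) by (apply pow_lt; lra).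
    rewrite (psi2_closed (S k)) by (simpl in *; lia). rewrite INR_pow2. simpl pow.
    replace (2 * (2 * 2 ^ k) / (2 * 2 ^ k) - 3) with (-1) by (field; lra).
    replace (2 * (2 * 2 ^ k) / 2 ^ k - 3) with 1 by (field; lra).
    unfold Rabs; repeat destruct Rcase_abs; lra.
  - apply psi2_closed. lia.
Qed.

Definition f (j : nat) : R := if (j <=? 1)%nat then 0 else psi2 (INR j).

Lemma f_harm : harm f.
Proof.
  intros i Hi. unfold f.
  assert (Hp := Nat.log2_spec i ltac:(lia)).
  set (k := Nat.log2 i) in *.
  destruct k as [|[|k3]]; [simpl in Hp; lia|simpl in Hp; lia|].
  assert (HQ : (0 < 2^k3)%nat) by (apply Nat.neq_0_lt_0, Nat.pow_nonzero; lia).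
  replace (2^(S (S k3)))%nat with (4 * 2^k3)%nat in Hp by (simpl; lia).
  replace (2^(S (S (S k3))))%nat with (8 * 2^k3)%nat in Hp by (simpl; lia).
  set (Q := (2^k3)%nat) in *.
  assert (Hq : INR Q = 2^k3) by apply INR_pow2.
  assert (Hq0 : 0 < 2^k3) by (apply pow_lt; lra).
  rewrite (proj2 (Nat.leb_nle i 1)) by lia.
  rewrite (psi2_closed (S (S k3)) i) by (simpl; fold Q; lia).
  destruct (half_spec i) as [a [[E1 [E2 E3]]|[E1 [E2 E3]]]]; rewrite E2, E3.
  - rewrite (proj2 (Nat.leb_nle a 1)) by lia.
    rewrite (psi2_closed' (S k3) a) by (simpl; fold Q; lia).
    subst i. rewrite mult_INR. simpl pow.
    replace (2 * (INR 2 * INR a) / (2 * (2 * 2 ^ k3)) - 3) with (2 * INR a / (2 * 2 ^ k3) - 3)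
      by (simpl; field; lra). lra.
  - rewrite (proj2 (Nat.leb_nle a 1)) by lia.
    rewrite (proj2 (Nat.leb_nle (a+1) 1)) by lia.
    rewrite (psi2_closed' (S k3) a) by (simpl; fold Q; lia).
    rewrite (psi2_closed' (S k3) (a+1)) by (simpl; fold Q; lia).
    assert (Hc : (6*Q+1 <= i \/ i+1 <= 6*Q)%nat) by lia.
    subst i. rewrite !plus_INR, mult_INR in *. simpl pow. assert (I2 : INR 2 = 2) by (simpl; lra). rewrite ?I2, ?INR_1 in *.
    destruct Hc as [Hc|Hc]; apply le_INR in Hc; rewrite ?plus_INR, ?mult_INR, Hq in Hc;
    simpl in Hc;
    set (x := INR a) in *; set (z := / (2 * 2^k3));
    (assert (Hz : 0 < z) by (unfold z; apply Rinv_0_lt_compat; lra));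
    replace (2 * (2 * x + 1) / (2 * (2 * 2 ^ k3)) - 3) with ((2*x+1 - 6 * 2^k3) * z) by (unfold z; field; lra);
    replace (2 * x / (2 * 2 ^ k3) - 3) with ((2*x - 6 * 2^k3) * z) by (unfold z; field; lra);
    replace (2 * (x + 1) / (2 * 2 ^ k3) - 3) with ((2*x + 2 - 6 * 2^k3) * z) by (unfold z; field; lra);
    rewrite !Rabs_mult, (Rabs_right z) by lra;
    assert (Hs : Rabs (2*x - 6*2^k3) + Rabs (2*x+2 - 6*2^k3) = 2 * Rabs (2*x+1 - 6*2^k3))
      by (unfold Rabs; repeat destruct Rcase_abs; lra);
    replace ((Rabs (2*x - 6*2^k3) * z + Rabs (2*x+2 - 6*2^k3) * z) / 2)
      with ((Rabs (2*x - 6*2^k3) + Rabs (2*x+2 - 6*2^k3)) * z / 2) by field;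
    rewrite Hs; field.
Qed.

Lemma harm_const (h : nat -> R) c : (forall j, (2 <= j)%nat -> h j = c) -> harm h.
Proof.
  intros H i Hi. destruct (half_spec i) as [q [[E1 [E2 E3]]|[E1 [E2 E3]]]]; rewrite E2, E3;
  rewrite !H by lia; field.
Qed.

Theorem mainTheorem7 (n : nat) (hn : (2 <= n)%nat) :
  is_pi 2 n (psi2 (INR n)) /\
  is_pi 3 n (1 - psi2 (INR n)) /\
  is_pi 1 n 0.
Proof.
  unfold is_pi.
  destruct (Nat.leb_spec n 3) as [Hs|Hl].
  - assert (H2 : psi2 (INR 2) = 1).
    { rewrite (psi2_closed 1 2) by (simpl; lia). simpl. unfold Rabs; destruct Rcase_abs; lra. }
    assert (H3 : psi2 (INR 3) = 0).
    { rewrite (psi2_closed 1 3) by (simpl; lia). simpl.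
      replace (2 * (1 + 1 + 1) / (2 * 1) - 3) with 0 by field. apply Rabs_R0. }
    assert (n = 2 \/ n = 3)%nat as [->| ->] by lia;
    (split; [|split]); apply (ev_cv _ _ 0); intros k _; rewrite small by lia; cbn [Nat.eqb];
    rewrite ?H2, ?H3; ring.
  - set (d := fun k j => Defs.dist k n j).
    assert (Hcomp : forall h, harm h -> forall k, (n <= k)%nat ->
       d k 0%nat * h 0%nat + d k 1%nat * h 1%nat + d k 2%nat * h 2%nat + d k 3%nat * h 3%nat = h n).
    { intros h Hh k Hk. rewrite <- (invariance h n Hh k). symmetry.
      apply (tail (fun j => Defs.dist k n j * h j)); [lia|].
      intros j Hj. rewrite support by lia. ring. }
    pose (h0 := fun j : nat => if Nat.eqb j 0 then 1 else 0).
    pose (h1 := fun j : nat => if Nat.eqb j 1 then 1 else 0).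
    pose (hG := fun j : nat => if (2 <=? j)%nat then 1 else 0).
    assert (A0 := Hcomp h0 ltac:(apply (harm_const _ 0); intros j Hj; unfold h0; destruct (Nat.eqb_spec j 0); [lia|reflexivity])).
    assert (A1 := Hcomp h1 ltac:(apply (harm_const _ 0); intros j Hj; unfold h1; destruct (Nat.eqb_spec j 1); [lia|reflexivity])).
    assert (AG := Hcomp hG ltac:(apply (harm_const _ 1); intros j Hj; unfold hG; rewrite (proj2 (Nat.leb_le 2 j)) by lia; reflexivity)).
    assert (AF := Hcomp f f_harm).
    assert (F2 : f 2%nat = 1).
    { unfold f. cbn [Nat.leb]. rewrite (psi2_closed 1 2) by (simpl; lia). simpl. unfold Rabs; destruct Rcase_abs; lra. }
    assert (F3 : f 3%nat = 0).
    { unfold f. cbn [Nat.leb]. rewrite (psi2_closed 1 3) by (simpl; lia). simpl.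
      replace (2 * (1 + 1 + 1) / (2 * 1) - 3) with 0 by field. apply Rabs_R0. }
    assert (F0 : f 0%nat = 0) by reflexivity.
    assert (F1 : f 1%nat = 0) by reflexivity.
    assert (Fn : f n = psi2 (INR n)) by (unfold f; rewrite (proj2 (Nat.leb_nle n 1)) by lia; reflexivity).
    assert (Eh0 : h0 n = 0) by (unfold h0; destruct (Nat.eqb_spec n 0); [lia|reflexivity]).
    assert (Eh1 : h1 n = 0) by (unfold h1; destruct (Nat.eqb_spec n 1); [lia|reflexivity]).
    assert (EhG : hG n = 1) by (unfold hG; rewrite (proj2 (Nat.leb_le 2 n)) by lia; reflexivity).
    (split; [|split]); apply (ev_cv _ _ n); intros k Hk;
    specialize (A0 k Hk); specialize (A1 k Hk); specialize (AG k Hk); specialize (AF k Hk);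
    rewrite Eh0 in A0; rewrite Eh1 in A1; rewrite EhG in AG; unfold h0, h1, hG in A0, A1, AG; cbn [Nat.eqb Nat.leb] in A0, A1, AG;
    rewrite F0, F1, F2, F3, Fn in AF; unfold d in *; lra.
Qed.
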